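(* Let $K\subseteq\mathbb{R}^n$ be a nonempty compact set, let $\mathbf{c}\in\mathbb{Z}^n$, $F:=F_K(\mathbf{c})$, and assume $h_K(\mathbf{c})\in\mathbb{Z}$. Let $\mathbf{a}_1,\dots,\mathbf{a}_k\in\mathbb{Z}^n$. Then there exist integers $n_1,\dots,n_k\ge0$ such that $$\mathrm{CG}\big(K,(\mathbf{a}_1+n_1\mathbf{c},\dots,\mathbf{a}_k+n_k\mathbf{c})\big)\cap H^=_K(\mathbf{c})=\mathrm{CG}\big(F,(\mathbf{a}_1,\dots,\mathbf{a}_k)\big).$$
   Context: $h_K(\mathbf{a})=\sup_{\mathbf{x}\in K}\mathbf{a}\mathbf{x}$, with $h_\emptyset\equiv-\infty$. For nonempty compact $K$: $H^=_K(\mathbf{a}):=\{\mathbf{x}:\mathbf{a}\mathbf{x}=h_K(\mathbf{a})\}$ and $F_K(\mathbf{a}):=K\cap H^=_K(\mathbf{a})$. For $\mathbf{a}\in\mathbb{Z}^n$, $\mathrm{CG}(K,\mathbf{a}):=K\cap\{\mathbf{x}:\mathbf{a}\mathbf{x}\le\lfloor h_K(\mathbf{a})\rfloor\}$; for a list, $\mathrm{CG}(K,(\mathbf{a}_1,\dots,\mathbf{a}_k)):=\mathrm{CG}(\mathrm{CG}(K,\mathbf{a}_1),(\mathbf{a}_2,\dots,\mathbf{a}_k))$ and $\mathrm{CG}(K,\emptyset)=K$. *)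

(* Defs.v *)
From HB Require Import structures.
From mathcomp Require Import all_boot all_order all_algebra.
From mathcomp Require Import all_classical all_reals all_analysis.
Set Implicit Arguments. Unset Strict Implicit. Unset Printing Implicit Defensive.
Import Order.TTheory GRing.Theory Num.Theory.
Import numFieldNormedType.Exports.
Local Open Scope classical_set_scope.
Local Open Scope ring_scope.

Definition idot (R : realType) (n : nat) (a : 'rV[int]_n) (x : 'rV[R]_n) : R :=
  \sum_(i < n) (a ord0 i)%:~R * x ord0 i.

(* support function h_K(a) = sup_{x in K} a x, in the extended reals
   (h_emptyset = -oo automatically) *)
Definition supp (R : realType) (n : nat) (K : set 'rV[R]_n) (a : 'rV[int]_n) : \bar R :=
  ereal_sup [set (idot a x)%:E | x in K].

Definition efloor (R : realType) (e : \bar R) : \bar R :=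
  match e with
  | EFin r => ((Num.floor r)%:~R)%:E
  | _ => e
  end.

Definition Hyp (R : realType) (n : nat) (K : set 'rV[R]_n) (a : 'rV[int]_n) : set 'rV[R]_n :=
  [set x | (idot a x)%:E = supp K a].

Definition Face (R : realType) (n : nat) (K : set 'rV[R]_n) (a : 'rV[int]_n) : set 'rV[R]_n :=
  K `&` Hyp K a.

Definition CG (R : realType) (n : nat) (K : set 'rV[R]_n) (a : 'rV[int]_n) : set 'rV[R]_n :=
  K `&` [set x | ((idot a x)%:E <= efloor (supp K a))%E].

Fixpoint CGs (R : realType) (n : nat) (K : set 'rV[R]_n) (s : seq 'rV[int]_n) : set 'rV[R]_n :=
  match s with
  | [::] => K
  | a :: s' => CGs (CG K a) s'
  end.

(* Main.v *)
Require Import Defs.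
From HB Require Import structures.
From mathcomp Require Import all_boot all_order all_algebra.
From mathcomp Require Import all_classical all_reals all_analysis.
From mathcomp Require Import ring lra.
Import Order.TTheory GRing.Theory Num.Theory.
Import numFieldNormedType.Exports.
Local Open Scope classical_set_scope.
Local Open Scope ring_scope.

Section S.
Variables (R : realType) (n : nat).

Lemma idot_cont (b : 'rV[int]_n) : continuous (fun x : 'rV[R]_n => idot b x).
Proof.
rewrite /idot.
have H : forall s : seq 'I_n, continuous (fun x : 'rV[R]_n => \sum_(i <- s) (b ord0 i)%:~R * x ord0 i).
  elim=> [|i s IH] x.
    rewrite (_ : (fun _ => _) = fun=> 0); first exact: cst_continuous.
    by apply/funext => y; rewrite big_nil.
  rewrite (_ : (fun _ => _) = fun y : 'rV[R]_n => (b ord0 i)%:~R * y ord0 i + \sum_(j <- s) (b ord0 j)%:~R * y ord0 j); last first.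
    by apply/funext => y; rewrite big_cons.
  apply: (continuousD (f := fun y : 'rV[R]_n => (b ord0 i)%:~R * y ord0 i)); last exact: IH.
  apply: cvgM => //=; try exact: cst_continuous; try apply: coord_continuous.
  exact: (@nbhs_filter _ x).
exact: H.
Qed.

Lemma idot_lin (a c : 'rV[int]_n) (m : int) (x : 'rV[R]_n) :
  idot (a + m *: c) x = idot a x + m%:~R * idot c x.
Proof.
rewrite /idot mulr_sumr -big_split; apply: eq_bigr => i _ /=.
rewrite !mxE intrD intrM; ring.
Qed.

Lemma closed_idot_le (b : 'rV[int]_n) (r : R) : closed [set x : 'rV[R]_n | idot b x <= r].
Proof.
have h := (continuous_closedP _).1 (@idot_cont b).
exact: (h [set y | y <= r] (@closed_le R r)).
Qed.
Lemma closed_idot_ge (b : 'rV[int]_n) (r : R) : closed [set x : 'rV[R]_n | r <= idot b x].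
Proof.
have h := (continuous_closedP _).1 (@idot_cont b).
exact: (h [set y | r <= y] (@closed_ge R r)).
Qed.

Lemma closed_idot_lee (b : 'rV[int]_n) (e : \bar R) :
  closed [set x : 'rV[R]_n | ((idot b x)%:E <= e)%E].
Proof.
case: e => [r||].
- by under eq_set do rewrite lee_fin; exact: closed_idot_le.
- rewrite (_ : [set x | _] = setT); first exact: closedT.
  by apply/seteqP; split => x //= _; exact: leey.
- rewrite (_ : [set x | _] = set0); first exact: closed0.
  by apply/seteqP; split => x //=; rewrite leeNy_eq.
Qed.


Lemma sup_max (A : set 'rV[R]_n) (b : 'rV[int]_n) x1 :
  A x1 -> (forall x, A x -> idot b x <= idot b x1) -> supp A b = (idot b x1)%:E.
Proof.
move=> Ax1 Hm; apply/eqP; rewrite eq_le; apply/andP; split.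
- by apply: ge_ereal_sup => _ [x Ax <-]; rewrite lee_fin; exact: Hm.
- by apply: ereal_sup_ubound; exists x1.
Qed.

Lemma step (K : set 'rV[R]_n) (c a : 'rV[int]_n) (z : int) :
  compact K -> (forall x, K x -> idot c x <= z%:~R) ->
  exists N : nat, CG K (a + N%:Z *: c) `&` [set x | idot c x = z%:~R]
     = CG (K `&` [set x | idot c x = z%:~R]) a.
Proof.
move=> Kc Kz; set H := [set x | _].
have [[x0 [Kx0 Hx0]]|F0] := pselect ((K `&` H) !=set0); last first.
  exists 0%N; apply/seteqP; split => x.
  - by move=> [[Kx _] Hx]; exfalso; apply: F0; exists x.
  - by move=> [[Kx Hx] _]; exfalso; apply: F0; exists x.
have HE : K `&` H = K `&` [set x | z%:~R <= idot c x].
  apply/seteqP; split => x [Kx Hx]; split => //=.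
  - by move: Hx; rewrite /H /= => ->.
  - by rewrite /H /=; apply/eqP; rewrite eq_le Kz.
have Fc : compact (K `&` H).
  by rewrite HE; apply: compact_closedI => //; exact: closed_idot_ge.
have [x1 x1F x1max] := EVT_max_rV (ex_intro _ x0 (conj Kx0 Hx0)) Fc
   (continuous_subspaceT (@idot_cont a)).
have [x2 x2K x2max] := EVT_max_rV (ex_intro _ x0 Kx0) Kc
   (continuous_subspaceT (@idot_cont a)).
rewrite inE in x1F; rewrite inE in x2K.
set hF := idot a x1; set M := idot a x2.
set f := Num.floor hF.
set u := (hF + (f + 1)%:~R) / 2.
have hFf : hF < (f + 1)%:~R := floorD1_gt hF.
have fh : f%:~R <= hF := floor_le hF.
have hFu : hF < u by rewrite /u; lra.
have uf : u < (f + 1)%:~R by rewrite /u; lra.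
have [d d0 dP] : exists2 d : R, 0 < d &
    forall x, K x -> u <= idot a x -> idot c x <= z%:~R - d.
  have [[y [Ky uy]]|K0] := pselect ((K `&` [set x | u <= idot a x]) !=set0); last first.
    by exists 1 => // x Kx ux; exfalso; apply: K0; exists x; split.
  have K2c : compact (K `&` [set x | u <= idot a x]).
    by apply: compact_closedI => //; exact: closed_idot_ge.
  have [x3 x3K x3max] := EVT_max_rV (ex_intro _ y (conj Ky uy)) K2c
     (continuous_subspaceT (@idot_cont c)).
  rewrite inE in x3K; case: x3K => Kx3 ux3.
  exists (z%:~R - idot c x3).
    rewrite subr_gt0 lt_neqAle Kz // andbT; apply/eqP => e.
    have : idot a x3 <= hF by apply: x1max; rewrite inE; split.
    move: ux3 => /=; lra.
  move=> x Kx ux.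
  have : idot c x <= idot c x3 by apply: x3max; rewrite inE; split.
  lra.
pose N := (Num.truncn ((M - hF) / d)).+1.
have Nd : M - hF < N%:R * d by rewrite -ltr_pdivrMr //; exact: truncnS_gt.
have N0 : 0 <= N%:R :> R by [].
exists N.
set b := a + N%:Z *: c.
have NE : (N%:Z)%:~R = N%:R :> R by [].
have bnd : forall x, K x -> idot b x <= u + N%:R * z%:~R.
  move=> x Kx; rewrite /b idot_lin NE.
  have cz := Kz x Kx.
  have ax : idot a x <= M by apply: x2max; rewrite inE.
  case: (leP u (idot a x)) => ux.
  - have cd := dP x Kx ux.
    have : N%:R * idot c x <= N%:R * (z%:~R - d) by rewrite ler_wpM2l.
    rewrite mulrBr; nra.
  - have : N%:R * idot c x <= N%:R * z%:~R by rewrite ler_wpM2l.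
    lra.
have bx1 : idot b x1 = hF + N%:R * z%:~R.
  by case: x1F => _ Hx1; rewrite /b idot_lin NE Hx1.
have S_le : (supp K b <= (u + N%:R * z%:~R)%:E)%E.
  by apply: ge_ereal_sup => _ [x Kx <-]; rewrite lee_fin; exact: bnd.
have S_ge : ((hF + N%:R * z%:~R)%:E <= supp K b)%E.
  by rewrite -bx1; apply: ereal_sup_ubound; exists x1 => //; case: x1F.
have [s Se] : exists s, supp K b = s%:E.
  move: S_le S_ge; case: (supp K b) => [s||]; first by exists s.
  - by rewrite leye_eq.
  - by rewrite leeNy_eq.
have E1 : efloor (supp K b) = ((f + N%:Z * z)%:~R)%:E.
  rewrite Se /=; congr (_%:E); congr (_%:~R); apply: floor_def.
  move: S_le S_ge; rewrite Se !lee_fin => h1 h2.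
  rewrite !intrD intrM NE; apply/andP; split; lra.
have E2 : efloor (supp (K `&` H) a) = (f%:~R)%:E.
  by rewrite (@sup_max (K `&` H) a x1 x1F) //= => x Fx; apply: x1max; rewrite inE.
rewrite /CG E1 E2; apply/seteqP; split => x /=.
- move=> [[Kx bx] Hx]; move: Hx; rewrite /H /= => Hx.
  split; first by split.
  move: bx; rewrite !lee_fin /b idot_lin Hx intrD intrM NE; lra.
- move=> [[Kx Hx] ax]; move: Hx; rewrite /H /= => Hx.
  split => //; split => //.
  move: ax; rewrite !lee_fin /b idot_lin Hx intrD intrM NE; lra.
Qed.


Lemma gen (c : 'rV[int]_n) (z : int) k (A : 'I_k -> 'rV[int]_n) (s : seq 'I_k) :
  uniq s -> forall K : set 'rV[R]_n, compact K ->
  (forall x, K x -> idot c x <= z%:~R) ->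
  exists N : 'I_k -> nat,
   CGs K [seq A i + (N i)%:Z *: c | i <- s] `&` [set x | idot c x = z%:~R]
   = CGs (K `&` [set x | idot c x = z%:~R]) [seq A i | i <- s].
Proof.
elim: s => [|i s IH] /=.
  by move=> _ K _ _; exists (fun=> 0%N).
case/andP => nis us K Kc Kz.
have [N1 E1] := @step K c (A i) z Kc Kz.
have K1c : compact (CG K (A i + N1%:Z *: c)).
  by apply: compact_closedI => //; exact: closed_idot_lee.
have K1z : forall x, CG K (A i + N1%:Z *: c) x -> idot c x <= z%:~R.
  by move=> x [Kx _]; exact: Kz.
have [N' E'] := IH us _ K1c K1z.
exists (fun j => if j == i then N1 else N' j).
rewrite /= eqxx.
have -> : [seq A j + (if j == i then N1 else N' j)%:Z *: c | j <- s]
        = [seq A j + (N' j)%:Z *: c | j <- s].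
  apply/eq_in_map => j js; case: eqP => // ji.
  by move: nis; rewrite -ji js.
by rewrite E' E1.
Qed.

End S.

Theorem lemma4p1 (R : realType) (n : nat) (K : set 'rV[R]_n)
  (K_ne : K !=set0) (K_compact : compact K)
  (c : 'rV[int]_n) (hc_int : exists z : int, supp K c = (z%:~R)%:E)
  (k : nat) (A : 'I_k -> 'rV[int]_n) :
  exists N : 'I_k -> nat,
    CGs K [seq A i + (N i)%:Z *: c | i <- enum 'I_k] `&` Hyp K c
    = CGs (Face K c) [seq A i | i <- enum 'I_k].
Proof.
case: hc_int => z hz.
have HE : Hyp K c = [set x | idot c x = z%:~R].
  by rewrite /Hyp hz; apply/seteqP; split => x /=; [case | move=> ->].
have Kz : forall x, K x -> idot c x <= z%:~R.
  move=> x Kx; rewrite -lee_fin -hz; apply: ereal_sup_ubound; by exists x.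
have [N EN] := @gen R n c z k A _ (enum_uniq 'I_k) K K_compact Kz.
by exists N; rewrite /Face HE.
Qed.
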